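(* There exist absolute constants $C_S,C_K>0$ such that the following holds. Let $n_1,n_2\ge2$, $1\le s_1\le n_1$, $1\le s_2\le n_2$, $1\le R\le\min\{n_1,n_2\}$, $\Gamma\ge1$, $m\ge1$. Then $$\int_0^{\Gamma\sqrt R/\sqrt m}\sqrt{\log N(S^{R,\Gamma}_{s_1,s_2},\|\cdot\|_F,\sqrt m\,\varepsilon)}\,d\varepsilon\le\sqrt{\frac{C_S\Gamma^2R^2(s_1+s_2)\log(\max\{n_1,n_2\})}{m}},$$ $$\int_0^{\Gamma\sqrt R/\sqrt m}\sqrt{\log N(K^{R,\Gamma}_{s_1,s_2},\|\cdot\|_F,\sqrt m\,\varepsilon)}\,d\varepsilon\le\sqrt{\frac{C_K\Gamma^2R^2(s_1+s_2)\log^3(\max\{n_1,n_2\})}{m}}.$$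
   Context: $N(M,\|\cdot\|,\varepsilon)$ is the minimal number of $\|\cdot\|$-balls of radius $\varepsilon$ covering $M$. $S^{R,\Gamma}_{s_1,s_2}$ is the set of $Z=\sum_{r=1}^R\sigma_ru^r(v^r)^T\in\mathbb{R}^{n_1\times n_2}$ with $|\mathrm{supp}(u^r)|\le s_1$, $|\mathrm{supp}(v^r)|\le s_2$, $\|u^r\|_2=\|v^r\|_2=1$, $\|\sigma\|_2\le\Gamma$. With $K_{n,s}=\{z\in\mathbb{R}^n:\|z\|_2\le1,\|z\|_1\le\sqrt s\}$, $K^{R,\Gamma}_{s_1,s_2}$ is the set of $Z=\sum_{r=1}^R\sigma_ru^r(v^r)^T$ with $u^r\in K_{n_1,s_1}$, $v^r\in K_{n_2,s_2}$, $\|u^r\|_2=\|v^r\|_2=1$, $\|\sigma\|_2\le\Gamma$. *)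

(* Defs.v *)
From Stdlib Require Import Reals Lra Lia List Classical ClassicalEpsilon.
Open Scope R_scope.

Fixpoint fsum (n : nat) (f : nat -> R) : R :=
  match n with
  | O => 0
  | S k => fsum k f + f k
  end.

(* vectors in R^n are functions nat -> R (only indices < n matter);
   matrices in R^{n1 x n2} are functions nat -> nat -> R. *)
Definition norm2 (n : nat) (u : nat -> R) : R := sqrt (fsum n (fun i => (u i)^2)).
Definition norm1 (n : nat) (u : nat -> R) : R := fsum n (fun i => Rabs (u i)).
Definition frob (n1 n2 : nat) (A : nat -> nat -> R) : R :=
  sqrt (fsum n1 (fun i => fsum n2 (fun j => (A i j)^2))).

Definition supp_le (n s : nat) (u : nat -> R) : Prop :=
  exists S : list nat, NoDup S /\ (length S <= s)%nat /\
    forall i, (i < n)%nat -> u i <> 0 -> In i S.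

Definition Kset (n s : nat) (z : nat -> R) : Prop :=
  norm2 n z <= 1 /\ norm1 n z <= sqrt (INR s).

Definition rank_sum (Rk : nat) (sigma : nat -> R) (u v : nat -> nat -> R)
  : nat -> nat -> R :=
  fun i j => fsum Rk (fun r => sigma r * u r i * v r j).

Definition Sset (n1 n2 s1 s2 Rk : nat) (Gamma : R) (Z : nat -> nat -> R) : Prop :=
  exists (sigma : nat -> R) (u v : nat -> nat -> R),
    Z = rank_sum Rk sigma u v /\
    (forall r, (r < Rk)%nat ->
       supp_le n1 s1 (u r) /\ supp_le n2 s2 (v r) /\
       norm2 n1 (u r) = 1 /\ norm2 n2 (v r) = 1) /\
    norm2 Rk sigma <= Gamma.

Definition KRset (n1 n2 s1 s2 Rk : nat) (Gamma : R) (Z : nat -> nat -> R) : Prop :=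
  exists (sigma : nat -> R) (u v : nat -> nat -> R),
    Z = rank_sum Rk sigma u v /\
    (forall r, (r < Rk)%nat ->
       Kset n1 s1 (u r) /\ Kset n2 s2 (v r) /\
       norm2 n1 (u r) = 1 /\ norm2 n2 (v r) = 1) /\
    norm2 Rk sigma <= Gamma.

(* M can be covered by k closed Frobenius balls of radius eps
   (centres arbitrary in R^{n1 x n2}) *)
Definition covers (n1 n2 : nat) (M : (nat -> nat -> R) -> Prop) (eps : R) (k : nat)
  : Prop :=
  exists centers : list (nat -> nat -> R), length centers = k /\
    forall Z, M Z -> exists c, In c centers /\ frob n1 n2 (fun i j => Z i j - c i j) <= eps.

Definition covnum (n1 n2 : nat) (M : (nat -> nat -> R) -> Prop) (eps : R) : nat :=
  epsilon (inhabits 0%nat)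
    (fun k => covers n1 n2 M eps k /\ forall k', covers n1 n2 M eps k' -> (k <= k')%nat).

(* the (possibly improper at 0) integral  int_0^T f  is <= B:
   for nonnegative f this is equivalent to: every truncation int_delta^T f
   exists (as a Riemann integral) and is <= B. *)
Definition improper_int_le (f : R -> R) (T B : R) : Prop :=
  forall delta, 0 < delta < T ->
    exists pr : Riemann_integrable f delta T, RiemannInt pr <= B.

(* Main.v *)
Require Import Defs.
From Stdlib Require Import Reals Lra Lia List Classical ClassicalEpsilon ZArith.
From Coquelicot Require Import Coquelicot.
Import ListNotations.
Open Scope R_scope.

Lemma fsum_ext n f g : (forall i, (i < n)%nat -> f i = g i) -> fsum n f = fsum n g.
Proof. induction n; simpl; intros H; auto. rewrite IHn by (intros; apply H; lia). rewrite H by lia. auto. Qed.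

Lemma fsum_le n f g : (forall i, (i < n)%nat -> f i <= g i) -> fsum n f <= fsum n g.
Proof. induction n; simpl; intros H; [lra|]. assert (f n <= g n) by (apply H; lia).
 assert (fsum n f <= fsum n g) by (apply IHn; intros; apply H; lia). lra. Qed.

Lemma fsum_nonneg n f : (forall i, (i < n)%nat -> 0 <= f i) -> 0 <= fsum n f.
Proof. intros H. replace 0 with (fsum n (fun _ => 0)). apply fsum_le; auto.
 induction n; simpl; auto. rewrite IHn. lra. intros; apply H; lia. Qed.

Lemma fsum_plus n f g : fsum n (fun i => f i + g i) = fsum n f + fsum n g.
Proof. induction n; simpl; [lra|]. rewrite IHn. lra. Qed.

Lemma fsum_minus n f g : fsum n (fun i => f i - g i) = fsum n f - fsum n g.
Proof. induction n; simpl; [lra|]. rewrite IHn. lra. Qed.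

Lemma fsum_scal n c f : fsum n (fun i => c * f i) = c * fsum n f.
Proof. induction n; simpl; [lra|]. rewrite IHn. lra. Qed.

Lemma fsum_const n c : fsum n (fun _ => c) = INR n * c.
Proof. induction n; simpl fsum; [simpl; lra|]. rewrite IHn, S_INR. lra. Qed.

Lemma fsum_S n f : fsum (S n) f = fsum n f + f n.
Proof. reflexivity. Qed.

Lemma CS_sq n a b : (fsum n (fun i => a i * b i))^2 <= fsum n (fun i => (a i)^2) * fsum n (fun i => (b i)^2).
Proof.
 induction n; [simpl; lra|]. rewrite !fsum_S.
 set (S := fsum n (fun i => a i * b i)) in *.
 set (A := fsum n (fun i => a i ^2)) in *.
 set (B := fsum n (fun i => b i ^2)) in *.
 assert (HA : 0 <= A) by (apply fsum_nonneg; intros; nra).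
 assert (HB : 0 <= B) by (apply fsum_nonneg; intros; nra).
 pose (sA := sqrt A). pose (sB := sqrt B).
 assert (E1 : sA * sA = A) by (apply sqrt_sqrt; auto).
 assert (E2 : sB * sB = B) by (apply sqrt_sqrt; auto).
 assert (P1 : 0 <= sA) by apply sqrt_pos. assert (P2 : 0 <= sB) by apply sqrt_pos.
 assert (HS : Rabs S <= sA * sB).
 { apply Rsqr_incr_0_var. unfold Rsqr. rewrite <- Rabs_mult, Rabs_pos_eq by nra. nra. nra. }
 assert (2 * S * (a n * b n) <= A * b n ^2 + a n ^2 * B).
 { assert (2 * S * (a n * b n) <= 2 * (sA * sB) * Rabs (a n * b n)).
   { rewrite Rmult_assoc, (Rmult_assoc 2 (sA*sB)). apply Rmult_le_compat_l; [lra|].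
     apply Rle_trans with (Rabs (S * (a n * b n))). apply Rle_abs.
     rewrite Rabs_mult. apply Rmult_le_compat_r; auto. apply Rabs_pos. }
   rewrite Rabs_mult in H.
   pose proof (Rabs_pos (a n)). pose proof (Rabs_pos (b n)).
   assert (Rabs (a n) ^2 = a n ^2) by (simpl; rewrite !Rmult_1_r, <- Rabs_mult; apply Rabs_pos_eq; nra).
   assert (Rabs (b n) ^2 = b n ^2) by (simpl; rewrite !Rmult_1_r, <- Rabs_mult; apply Rabs_pos_eq; nra).
   rewrite <- E1, <- E2, <- H2, <- H3.
   pose proof (pow2_ge_0 (sA * Rabs (b n) - sB * Rabs (a n))). nra. }
 replace ((S + a n * b n) ^ 2) with (S^2 + 2 * S * (a n * b n) + a n ^2 * b n ^2) by ring.
 replace ((A + a n ^ 2) * (B + b n ^ 2)) with (A * B + (A * b n ^2 + a n ^2 * B) + a n ^2 * b n ^2) by ring.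
 lra.
Qed.

Lemma CS n a b : fsum n (fun i => a i * b i) <= sqrt (fsum n (fun i => (a i)^2)) * sqrt (fsum n (fun i => (b i)^2)).
Proof.
 rewrite <- sqrt_mult_alt by (apply fsum_nonneg; intros; nra).
 apply Rle_trans with (Rabs (fsum n (fun i => a i * b i))). apply Rle_abs.
 rewrite <- sqrt_Rsqr_abs. apply sqrt_le_1_alt. unfold Rsqr. pose proof (CS_sq n a b) as HH. rewrite <- !Rsqr_pow2 in HH. unfold Rsqr in HH. lra.
Qed.

Lemma sq_nonneg_sum n (f : nat -> R) : 0 <= fsum n (fun i => f i ^ 2).
Proof. apply fsum_nonneg; intros; nra. Qed.

Lemma norm2_pos n x : 0 <= norm2 n x.
Proof. apply sqrt_pos. Qed.

Lemma entry_le_norm2 n x i : (i < n)%nat -> Rabs (x i) <= norm2 n x.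
Proof.
 intros Hi. unfold norm2. rewrite <- sqrt_Rsqr_abs. apply sqrt_le_1_alt.
 rewrite Rsqr_pow2. induction n. lia.
 rewrite fsum_S. destruct (Nat.eq_dec i n). subst. pose proof (sq_nonneg_sum n x). lra.
 assert (x i ^2 <= fsum n (fun i => x i ^2)) by (apply IHn; lia). nra.
Qed.

Lemma norm2_le n x y : (forall i, (i < n)%nat -> Rabs (y i) <= Rabs (x i)) -> norm2 n y <= norm2 n x.
Proof.
 intros H. unfold norm2. apply sqrt_le_1_alt. apply fsum_le. intros i Hi.
 specialize (H i Hi). pose proof (Rabs_pos (y i)).
 rewrite <- (pow2_abs (y i)), <- (pow2_abs (x i)). nra.
Qed.

Lemma norm2_ext n x y : (forall i, (i < n)%nat -> x i = y i) -> norm2 n x = norm2 n y.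
Proof. intros H. unfold norm2. f_equal. apply fsum_ext. intros; rewrite H; auto. Qed.

Lemma frob_ext n1 n2 A B : (forall i j, (i < n1)%nat -> (j < n2)%nat -> A i j = B i j) -> frob n1 n2 A = frob n1 n2 B.
Proof. intros H. unfold frob. f_equal. apply fsum_ext. intros. apply fsum_ext. intros; rewrite H; auto. Qed.

Lemma CS2 n1 n2 A B : fsum n1 (fun i => fsum n2 (fun j => A i j * B i j)) <= frob n1 n2 A * frob n1 n2 B.
Proof.
 unfold frob.
 apply Rle_trans with (fsum n1 (fun i => sqrt (fsum n2 (fun j => A i j ^2)) * sqrt (fsum n2 (fun j => B i j ^2)))).
 apply fsum_le; intros; apply CS.
 eapply Rle_trans. apply CS. right. f_equal; f_equal; apply fsum_ext; intros; rewrite pow2_sqrt; auto; apply sq_nonneg_sum.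
Qed.

Lemma frob_pos n1 n2 A : 0 <= frob n1 n2 A.
Proof. apply sqrt_pos. Qed.

Lemma frob_sq n1 n2 A : frob n1 n2 A ^2 = fsum n1 (fun i => fsum n2 (fun j => A i j ^2)).
Proof. unfold frob. rewrite pow2_sqrt; auto. apply fsum_nonneg; intros; apply sq_nonneg_sum. Qed.

Lemma frob_plus n1 n2 A B : frob n1 n2 (fun i j => A i j + B i j) <= frob n1 n2 A + frob n1 n2 B.
Proof.
 apply Rsqr_incr_0_var. 2: pose proof (frob_pos n1 n2 A); pose proof (frob_pos n1 n2 B); lra.
 rewrite !Rsqr_pow2, frob_sq.
 replace (fsum n1 (fun i => fsum n2 (fun j => (A i j + B i j)^2))) with
  (fsum n1 (fun i => fsum n2 (fun j => A i j ^2)) + 2 * fsum n1 (fun i => fsum n2 (fun j => A i j * B i j)) + fsum n1 (fun i => fsum n2 (fun j => B i j ^2))).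
 rewrite <- (frob_sq n1 n2 A), <- (frob_sq n1 n2 B). pose proof (CS2 n1 n2 A B). nra.
 rewrite <- fsum_scal, <- !fsum_plus. apply fsum_ext; intros.
 rewrite <- fsum_scal, <- !fsum_plus. apply fsum_ext; intros. ring.
Qed.

Lemma frob_fsum n1 n2 K (E : nat -> nat -> nat -> R) :
  frob n1 n2 (fun i j => fsum K (fun r => E r i j)) <= fsum K (fun r => frob n1 n2 (E r)).
Proof.
 induction K. simpl. unfold frob. right.
 rewrite (fsum_ext n1 _ (fun _ => 0)). rewrite fsum_const, Rmult_0_r. apply sqrt_0.
 intros. rewrite (fsum_ext n2 _ (fun _ => 0)). rewrite fsum_const; ring. intros; ring.
 rewrite fsum_S. eapply Rle_trans. 2: apply Rplus_le_compat_r; apply IHK.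
 apply (frob_plus n1 n2 (fun i j => fsum K (fun r => E r i j)) (E K)).
Qed.

Lemma frob_rank1 n1 n2 c a b : frob n1 n2 (fun i j => c * a i * b j) = Rabs c * norm2 n1 a * norm2 n2 b.
Proof.
 unfold frob, norm2.
 replace (fsum n1 (fun i => fsum n2 (fun j => (c * a i * b j)^2))) with
   (c^2 * fsum n1 (fun i => a i ^2) * fsum n2 (fun j => b j ^2)).
 rewrite !sqrt_mult_alt. rewrite <- (pow2_abs c), sqrt_pow2 by apply Rabs_pos. auto.
 nra. pose proof (sq_nonneg_sum n1 a). nra.
 transitivity (fsum n1 (fun i => (c^2 * fsum n2 (fun j => b j ^2)) * a i ^2)).
 rewrite fsum_scal. ring.
 apply fsum_ext; intros. rewrite (Rmult_comm (c^2)), Rmult_assoc, Rmult_comm, <- fsum_scal. apply fsum_ext; intros. ring.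
Qed.

Definition lev (h x : R) : Z := if Rle_dec 0 x then Int_part (x / h) else (- Int_part (- x / h))%Z.
Definition tr (h x : R) : R := IZR (lev h x) * h.

Lemma Int_part_nonneg y : 0 <= y -> (0 <= Int_part y)%Z /\ IZR (Int_part y) <= y < IZR (Int_part y) + 1.
Proof.
 intros Hy. destruct (base_Int_part y) as [H1 H2]. split; [|lra].
 apply le_IZR. assert (IZR (Int_part y) > -1) by lra.
 assert (-1 < Int_part y)%Z by (apply lt_IZR; simpl; lra). apply IZR_le. lia.
Qed.

Lemma tr_props h x : 0 < h ->
  Rabs (tr h x) <= Rabs x /\ Rabs (x - tr h x) <= h /\ (tr h x <> 0 -> h <= Rabs x).
Proof.
 intros Hh. unfold tr, lev. destruct (Rle_dec 0 x).
 - destruct (Int_part_nonneg (x/h)) as [Hz [H1 H2]]. unfold Rdiv; apply Rmult_le_pos; [lra|left; apply Rinv_0_lt_compat; lra].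
   set (z := Int_part (x/h)) in *. apply IZR_le in Hz. simpl in Hz.
   assert (IZR z * h <= x) by (apply Rmult_le_reg_r with (/h); [apply Rinv_0_lt_compat; lra|]; field_simplify; lra).
   assert (x < (IZR z + 1) * h) by (apply Rmult_lt_reg_r with (/h); [apply Rinv_0_lt_compat; lra|]; field_simplify; lra).
   rewrite !Rabs_pos_eq by nra. split; [lra|]. split; [lra|].
   intros Hne. assert (IZR z <> 0) by (intro E; rewrite E in Hne; lra).
   assert (z <> 0%Z) by (intro E; apply H3; rewrite E; auto).
   assert (1 <= IZR z) by (apply IZR_le; apply le_IZR in Hz; lia). nra.
 - destruct (Int_part_nonneg (-x/h)) as [Hz [H1 H2]]. unfold Rdiv; apply Rmult_le_pos; [lra|left; apply Rinv_0_lt_compat; lra].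
   set (z := Int_part (-x/h)) in *. apply IZR_le in Hz. simpl in Hz.
   rewrite opp_IZR.
   assert (IZR z * h <= -x) by (apply Rmult_le_reg_r with (/h); [apply Rinv_0_lt_compat; lra|]; field_simplify; lra).
   assert (-x < (IZR z + 1) * h) by (apply Rmult_lt_reg_r with (/h); [apply Rinv_0_lt_compat; lra|]; field_simplify; lra).
   rewrite (Rabs_left x) by lra. rewrite (Rabs_left1 (- IZR z * h)) by nra. rewrite (Rabs_left1 (x - - IZR z * h)) by nra. split; [lra|]. split; [lra|].
   intros Hne. assert (IZR z <> 0) by (intro E; rewrite E in Hne; lra).
   assert (z <> 0%Z) by (intro E; apply H3; rewrite E; auto).
   assert (1 <= IZR z) by (apply IZR_le; apply le_IZR in Hz; lia). nra.
Qed.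

Lemma tr_abs h x : 0 < h -> Rabs (tr h x) <= Rabs x.
Proof. intros Hh; destruct (tr_props h x Hh) as [? [? ?]]; auto. Qed.
Lemma tr_err h x : 0 < h -> Rabs (x - tr h x) <= h.
Proof. intros Hh; destruct (tr_props h x Hh) as [? [? ?]]; auto. Qed.
Lemma tr_nz h x : 0 < h -> tr h x <> 0 -> h <= Rabs x.
Proof. intros Hh; destruct (tr_props h x Hh) as [? [? ?]]; auto. Qed.
Lemma tr_zero h x : 0 < h -> x = 0 -> tr h x = 0.
Proof. intros Hh Hx. destruct (Req_dec (tr h x) 0); auto. apply tr_nz in H; auto. rewrite Hx, Rabs_R0 in H. lra. Qed.

Lemma tr_sq1 h x : 0 < h -> (x - tr h x)^2 <= h^2.
Proof. intros. pose proof (tr_err h x H). rewrite <- (pow2_abs (x - tr h x)). pose proof (Rabs_pos (x - tr h x)). nra. Qed.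

Lemma tr_sq2 h x : 0 < h -> (x - tr h x)^2 <= h * Rabs x.
Proof.
 intros Hh. destruct (Req_dec (tr h x) 0) as [E|E].
 - rewrite E, Rminus_0_r, <- pow2_abs. pose proof (tr_err h x Hh). rewrite E, Rminus_0_r in H. pose proof (Rabs_pos x). nra.
 - apply tr_nz in E; auto. pose proof (tr_sq1 h x Hh). nra.
Qed.

Lemma lev_bound h x : 0 < h -> Rabs (IZR (lev h x)) * h <= Rabs x.
Proof. intros Hh. pose proof (tr_abs h x Hh). unfold tr in H. rewrite Rabs_mult, (Rabs_pos_eq h) in H; lra. Qed.

Definition alph (n M : nat) : list (nat * nat) := list_prod (seq 0 n) (seq 0 (2*M+1)).

Fixpoint all_lists {A : Type} (k : nat) (l : list A) : list (list A) :=
  match k with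
  | O => [[]]
  | S k => map (fun p => fst p :: snd p) (list_prod l (all_lists k l))
  end.

Lemma length_all_lists {A} k (l : list A) : length (all_lists k l) = (length l ^ k)%nat.
Proof. induction k; simpl; auto. rewrite length_map, length_prod, IHk. auto. Qed.

Lemma in_all_lists {A} k (l : list A) c : length c = k -> (forall x, In x c -> In x l) -> In c (all_lists k l).
Proof.
 revert c. induction k; intros c Hl Hin.
 - destruct c; simpl in *; try lia. auto.
 - destruct c as [|a c]; simpl in *; try lia. apply in_map_iff. exists (a, c). split; auto.
   apply in_prod; auto.
Qed.

Definition dec (h : R) (M : nat) (c : list (nat * nat)) (i : nat) : R :=
  fold_right (fun p acc => (if Nat.eqb (fst p) i then (INR (snd p) - INR M) * h else 0) + acc) 0 c.

Lemma dec_app h M c1 c2 i : dec h M (c1 ++ c2) i = dec h M c1 i + dec h M c2 i.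
Proof. induction c1; simpl. lra. unfold dec in *. simpl. rewrite IHc1. lra. Qed.

Lemma dec_pad h M m i : dec h M (repeat (0%nat, M) m) i = 0.
Proof. induction m; simpl; auto. unfold dec in *; simpl. rewrite IHm. destruct i; ring. Qed.

Definition encf (h : R) (M : nat) (x : nat -> R) (i : nat) : nat * nat :=
  (i, Z.to_nat (lev h (x i) + Z.of_nat M)).

Lemma dec_map h M x S i : NoDup S -> (forall j, In j S -> (- Z.of_nat M <= lev h (x j))%Z) ->
  dec h M (map (encf h M x) S) i = if in_dec Nat.eq_dec i S then tr h (x i) else 0.
Proof.
 induction S as [|a S IH]; intros Hnd Hl; simpl. auto.
 inversion Hnd; subst. unfold dec in *. simpl. rewrite IH; [| auto | intros; apply Hl; simpl; auto].
 destruct (Nat.eqb_spec a i).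
 - subst. destruct (in_dec Nat.eq_dec i S); [contradiction|].
   destruct (Nat.eq_dec i i); [|contradiction]. simpl.
   unfold tr. assert (HL := Hl i (or_introl eq_refl)).
   rewrite INR_IZR_INZ, Z2Nat.id by lia. rewrite plus_IZR, <- INR_IZR_INZ. ring.
 - destruct (in_dec Nat.eq_dec i S); destruct (Nat.eq_dec a i); try contradiction; simpl; try lra.
Qed.

Lemma vec_cover n k M h x S : (0 < n)%nat -> 0 < h -> NoDup S -> (forall i, In i S -> (i < n)%nat) -> (length S <= k)%nat ->
  (forall i, (i < n)%nat -> tr h (x i) <> 0 -> In i S) ->
  (forall i, In i S -> Rabs (x i) <= h * INR M) ->
  exists c, In c (all_lists k (alph n M)) /\ forall i, (i < n)%nat -> dec h M c i = tr h (x i).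
Proof.
 intros Hn Hh Hnd HSn Hlen Hsupp Hb.
 assert (Hlev : forall j, In j S -> (- Z.of_nat M <= lev h (x j) <= Z.of_nat M)%Z).
 { intros j Hj. pose proof (lev_bound h (x j) Hh). specialize (Hb j Hj).
   assert (Rabs (IZR (lev h (x j))) <= INR M).
   { apply Rmult_le_reg_r with h; auto. lra. }
   rewrite INR_IZR_INZ in H0. pose proof (Rle_abs (IZR (lev h (x j)))). pose proof (Rle_abs (- IZR (lev h (x j)))). rewrite Rabs_Ropp in H2.
   split; [apply le_IZR; rewrite opp_IZR; lra | apply le_IZR; lra]. }
 exists (map (encf h M x) S ++ repeat (0%nat, M) (k - length S)). split.
 - apply in_all_lists. rewrite length_app, length_map, repeat_length. lia.
   intros p Hp. apply in_app_or in Hp. destruct Hp as [Hp|Hp].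
   + apply in_map_iff in Hp. destruct Hp as [j [E Hj]]. subst. unfold encf, alph.
     apply in_prod. apply in_seq. specialize (HSn j Hj). lia.
     apply in_seq. specialize (Hlev j Hj). lia.
   + apply repeat_spec in Hp. subst. apply in_prod; apply in_seq. lia. lia.
 - intros i Hi. rewrite dec_app, dec_pad, Rplus_0_r, dec_map; auto.
   destruct (in_dec Nat.eq_dec i S); auto. symmetry. destruct (Req_dec (tr h (x i)) 0); auto.
   exfalso; apply n0; auto. intros j Hj; apply Hlev; auto.
Qed.

Definition FactorOK (n k : nat) (h : R) (M : nat) (eta : R) (x : nat -> R) : Prop :=
  exists S, NoDup S /\ (forall i, In i S -> (i < n)%nat) /\ (length S <= k)%nat /\
    (forall i, (i < n)%nat -> tr h (x i) <> 0 -> In i S) /\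
    (forall i, In i S -> Rabs (x i) <= h * INR M) /\
    norm2 n (fun i => x i - tr h (x i)) <= eta.

Lemma filter_seq_S (p : nat -> bool) n : filter p (seq 0 (S n)) = filter p (seq 0 n) ++ (if p n then [n] else []).
Proof. rewrite seq_S, filter_app. simpl. destruct (p n); auto. Qed.

Lemma fsum_filter_ub (p : nat -> bool) n f c : 0 <= c ->
  (forall i, (i < n)%nat -> p i = false -> f i = 0) -> (forall i, (i < n)%nat -> f i <= c) ->
  fsum n f <= INR (length (filter p (seq 0 n))) * c.
Proof.
 intros Hc. induction n; intros H1 H2. simpl; lra.
 rewrite fsum_S, filter_seq_S, length_app, plus_INR.
 assert (fsum n f <= INR (length (filter p (seq 0 n))) * c) by (apply IHn; intros; [apply H1|apply H2]; auto; lia).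
 destruct (p n) eqn:E; simpl.
 - specialize (H2 n ltac:(lia)). lra.
 - rewrite (H1 n ltac:(lia) E). lra.
Qed.

Lemma fsum_filter_lb (p : nat -> bool) n g c :
  (forall i, (i < n)%nat -> p i = true -> c <= g i) -> (forall i, (i < n)%nat -> 0 <= g i) ->
  INR (length (filter p (seq 0 n))) * c <= fsum n g.
Proof.
 induction n; intros H1 H2. simpl; lra.
 rewrite fsum_S, filter_seq_S, length_app, plus_INR.
 assert (INR (length (filter p (seq 0 n))) * c <= fsum n g) by (apply IHn; intros; [apply H1|apply H2]; auto; lia).
 destruct (p n) eqn:E; simpl.
 - specialize (H1 n ltac:(lia) E). lra.
 - specialize (H2 n ltac:(lia)). lra.
Qed.

Lemma norm2_1_entry n x i : norm2 n x = 1 -> (i < n)%nat -> Rabs (x i) <= 1.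
Proof. intros H Hi. rewrite <- H. apply entry_le_norm2; auto. Qed.

Lemma sqrt_fsum_le n f b : 0 <= b -> fsum n f <= b ^ 2 -> sqrt (fsum n f) <= b.
Proof. intros Hb H. rewrite <- (sqrt_pow2 b Hb). apply sqrt_le_1_alt. auto. Qed.

Lemma factor_S n s M x : supp_le n s x -> norm2 n x = 1 -> (1 <= M)%nat ->
  FactorOK n s (1 / INR M) M (sqrt (INR s) / INR M) x.
Proof.
 intros [S0 [Hnd [Hlen Hsupp]]] Hx HM.
 assert (HMp : 1 <= INR M) by (apply (le_INR 1); auto).
 assert (Hh : 0 < 1 / INR M) by (apply Rdiv_lt_0_compat; lra).
 set (S := filter (fun i => Nat.ltb i n) S0).
 exists S. split; [apply NoDup_filter; auto|]. split.
 { intros i Hi. apply filter_In in Hi. destruct Hi. apply Nat.ltb_lt; auto. }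
 split. { eapply Nat.le_trans. apply filter_length_le. auto. }
 split. { intros i Hi Htr. apply filter_In. split. apply Hsupp; auto. intro E; apply Htr; apply tr_zero; auto. apply Nat.ltb_lt; auto. }
 split. { intros i Hi. apply filter_In in Hi. destruct Hi as [_ Hi]. apply Nat.ltb_lt in Hi.
   replace (1 / INR M * INR M) with 1 by (field; lra). apply norm2_1_entry with n; auto. }
 unfold norm2. apply sqrt_fsum_le. unfold Rdiv; apply Rmult_le_pos; [apply sqrt_pos|left; apply Rinv_0_lt_compat; lra].
 set (p := fun i => if in_dec Nat.eq_dec i S then true else false).
 eapply Rle_trans. apply (fsum_filter_ub p n _ ((1 / INR M)^2)). nra.
 - intros i Hi Hp. unfold p in Hp. destruct (in_dec Nat.eq_dec i S); try discriminate.
   destruct (Req_dec (tr (1 / INR M) (x i)) 0) as [E|E].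
   + rewrite E. destruct (Req_dec (x i) 0) as [E2|E2]. rewrite E2; ring.
     exfalso. apply n0. apply filter_In. split. apply Hsupp; auto. apply Nat.ltb_lt; auto.
   + exfalso. apply n0. apply filter_In. split. apply Hsupp; auto. intro E2; apply E, tr_zero; auto. apply Nat.ltb_lt; auto.
 - intros. apply tr_sq1; auto.
 - assert (length (filter p (seq 0 n)) <= length S)%nat.
   { apply NoDup_incl_length. apply NoDup_filter, seq_NoDup. intros i Hi. apply filter_In in Hi. destruct Hi as [_ Hi].
     unfold p in Hi. destruct (in_dec Nat.eq_dec i S); auto; discriminate. }
   assert (length S <= s)%nat by (eapply Nat.le_trans; [apply filter_length_le| auto]).
   apply le_INR in H. apply le_INR in H0.
   replace ((sqrt (INR s) / INR M) ^ 2) with (INR s * (1 / INR M)^2).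
   assert (0 <= (1 / INR M)^2) by nra. nra.
   unfold Rdiv. rewrite (Rpow_mult_distr (sqrt (INR s))), pow2_sqrt by apply pos_INR. ring.
Qed.

Lemma factor_KA n s k M h x : Kset n s x -> norm2 n x = 1 -> 0 < h ->
  sqrt (INR s) <= h * INR k -> 1 <= h * INR M ->
  FactorOK n k h M (sqrt (h * sqrt (INR s))) x.
Proof.
 intros [_ H1] Hx Hh Hk HM.
 set (p := fun i => if Req_EM_T (tr h (x i)) 0 then false else true).
 exists (filter p (seq 0 n)). split; [apply NoDup_filter, seq_NoDup|]. split.
 { intros i Hi. apply filter_In in Hi. destruct Hi as [Hi _]. apply in_seq in Hi. lia. }
 split.
 { assert (INR (length (filter p (seq 0 n))) * h <= fsum n (fun i => Rabs (x i))).
   { apply fsum_filter_lb. intros i Hi Hp. unfold p in Hp. destruct (Req_EM_T (tr h (x i)) 0); try discriminate.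
     apply tr_nz; auto. intros; apply Rabs_pos. }
   unfold norm1 in H1. apply INR_le. apply Rmult_le_reg_r with h; auto. lra. }
 split.
 { intros i Hi Htr. apply filter_In. split. apply in_seq; lia. unfold p. destruct (Req_EM_T (tr h (x i)) 0); auto. }
 split.
 { intros i Hi. apply filter_In in Hi. destruct Hi as [Hi _]. apply in_seq in Hi.
   apply Rle_trans with 1; auto. apply norm2_1_entry with n; auto; lia. }
 unfold norm2. apply sqrt_le_1_alt.
 apply Rle_trans with (fsum n (fun i => h * Rabs (x i))).
 apply fsum_le; intros; apply tr_sq2; auto.
 rewrite fsum_scal. unfold norm1 in H1. apply Rmult_le_compat_l; lra.
Qed.

Lemma factor_KB n M x : norm2 n x = 1 -> (1 <= M)%nat ->
  FactorOK n n (1 / INR M) M (sqrt (INR n) / INR M) x.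
Proof.
 intros Hx HM.
 assert (HMp : 1 <= INR M) by (apply (le_INR 1); auto).
 assert (Hh : 0 < 1 / INR M) by (apply Rdiv_lt_0_compat; lra).
 exists (seq 0 n). split; [apply seq_NoDup|]. split. { intros i Hi; apply in_seq in Hi; lia. }
 split. { rewrite length_seq; auto. } split. { intros; apply in_seq; lia. }
 split. { intros i Hi. apply in_seq in Hi.
   replace (1 / INR M * INR M) with 1 by (field; lra). apply norm2_1_entry with n; auto; lia. }
 unfold norm2. apply sqrt_fsum_le. unfold Rdiv; apply Rmult_le_pos; [apply sqrt_pos|left; apply Rinv_0_lt_compat; lra].
 eapply Rle_trans. apply fsum_le. intros. apply (tr_sq1 (1 / INR M) (x i) Hh).
 rewrite fsum_const. unfold Rdiv. rewrite (Rpow_mult_distr (sqrt (INR n))), pow2_sqrt by apply pos_INR. right. ring.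
Qed.

Lemma list_choice {T} (d : T) (Q : nat -> T -> Prop) K :
  (forall r, (r < K)%nat -> exists c, Q r c) ->
  exists l, length l = K /\ forall r, (r < K)%nat -> Q r (nth r l d).
Proof.
 induction K; intros H. exists []; split; auto; intros; lia.
 destruct IHK as [l [Hl Hq]]; [intros; apply H; lia|].
 destruct (H K ltac:(lia)) as [c Hc]. exists (l ++ [c]). split. rewrite length_app; simpl; lia.
 intros r Hr. destruct (Nat.eq_dec r K).
 - subst r. rewrite app_nth2 by lia. rewrite Hl, Nat.sub_diag. auto.
 - rewrite app_nth1 by lia. apply Hq; lia.
Qed.

Lemma nth_all_lists {T} (d : T) K C l : length l = K -> (forall r, (r < K)%nat -> In (nth r l d) C) -> In l (all_lists K C).
Proof.
 intros Hl H. apply in_all_lists; auto. intros x Hx. apply In_nth with (d := d) in Hx. destruct Hx as [r [Hr E]].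
 subst. apply H. lia.
Qed.

Lemma length_alph n M : length (alph n M) = (n * (2 * M + 1))%nat.
Proof. unfold alph. rewrite length_prod, !length_seq. auto. Qed.

Definition decZ (Rk : nat) (hs : R) (Ms : nat) (h1 : R) (M1 : nat) (h2 : R) (M2 : nat)
  (p : list (nat * nat) * (list (list (nat * nat)) * list (list (nat * nat)))) : nat -> nat -> R :=
  rank_sum Rk (dec hs Ms (fst p)) (fun r => dec h1 M1 (nth r (fst (snd p)) [])) (fun r => dec h2 M2 (nth r (snd (snd p)) [])).

Lemma rank1_err n1 n2 s s' (u u' v v' : nat -> R) hs e1 e2 :
  Rabs (s - s') <= hs -> Rabs s' <= Rabs s ->
  norm2 n1 u = 1 -> norm2 n2 v = 1 -> norm2 n1 u' <= 1 ->
  norm2 n1 (fun i => u i - u' i) <= e1 -> norm2 n2 (fun j => v j - v' j) <= e2 ->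
  0 <= e1 -> 0 <= e2 ->
  frob n1 n2 (fun i j => s * u i * v j - s' * u' i * v' j) <= hs + Rabs s * (e1 + e2).
Proof.
 intros H1 H2 Hu Hv Hu' He1 He2 P1 P2.
 rewrite (frob_ext n1 n2 _ (fun i j => (fun i j => (s - s') * u i * v j + s' * (u i - u' i) * v j) i j + s' * u' i * (v j - v' j))).
 2: intros; ring.
 eapply Rle_trans. apply frob_plus.
 eapply Rle_trans. apply Rplus_le_compat_r. apply (frob_plus n1 n2 (fun i j => (s - s') * u i * v j) (fun i j => s' * (u i - u' i) * v j)).
 rewrite (frob_rank1 n1 n2 (s - s') u v).
 rewrite (frob_rank1 n1 n2 s' (fun i => u i - u' i) v).
 rewrite (frob_rank1 n1 n2 s' u' (fun j => v j - v' j)).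
 rewrite Hu, Hv. pose proof (Rabs_pos s'). pose proof (norm2_pos n1 u'). pose proof (norm2_pos n1 (fun i => u i - u' i)).
 pose proof (norm2_pos n2 (fun j => v j - v' j)).
 assert (Rabs s' * norm2 n1 (fun i => u i - u' i) <= Rabs s * e1) by (apply Rmult_le_compat; auto).
 assert (Rabs s' * norm2 n1 u' * norm2 n2 (fun j => v j - v' j) <= Rabs s * 1 * e2) by (apply Rmult_le_compat; try nra; apply Rmult_le_compat; auto).
 nra.
Qed.

Lemma sum_abs_le Rk s : fsum Rk (fun r => Rabs (s r)) <= sqrt (INR Rk) * norm2 Rk s.
Proof.
 eapply Rle_trans. 2: right; apply Rmult_comm.
 replace (fsum Rk (fun r => Rabs (s r))) with (fsum Rk (fun r => Rabs (s r) * 1)) by (apply fsum_ext; intros; ring).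
 eapply Rle_trans. apply CS. unfold norm2. right. f_equal. f_equal. apply fsum_ext; intros. apply pow2_abs.
 rewrite (fsum_ext _ _ (fun _ => 1)) by (intros; ring). rewrite fsum_const. f_equal; ring.
Qed.

Lemma mat_cover n1 n2 Rk G Ms k1 M1 h1 e1 k2 M2 h2 e2 (P : (nat -> nat -> R) -> Prop) :
  (0 < n1)%nat -> (0 < n2)%nat -> (0 < Rk)%nat -> 0 < G -> (1 <= Ms)%nat -> 0 < h1 -> 0 < h2 -> 0 <= e1 -> 0 <= e2 ->
  (forall Z, P Z -> exists s u v, Z = rank_sum Rk s u v /\ norm2 Rk s <= G /\
     forall r, (r < Rk)%nat -> norm2 n1 (u r) = 1 /\ norm2 n2 (v r) = 1 /\
        FactorOK n1 k1 h1 M1 e1 (u r) /\ FactorOK n2 k2 h2 M2 e2 (v r)) ->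
  covers n1 n2 P (INR Rk * (G / INR Ms) + sqrt (INR Rk) * G * (e1 + e2))
    ((Rk * (2 * Ms + 1)) ^ Rk * (((n1 * (2 * M1 + 1)) ^ k1) ^ Rk * ((n2 * (2 * M2 + 1)) ^ k2) ^ Rk))%nat.
Proof.
 intros Hn1 Hn2 HR HG HMs Hh1 Hh2 He1 He2 HP.
 assert (HMsR : 1 <= INR Ms) by (apply (le_INR 1); auto).
 set (hs := G / INR Ms).
 assert (Hhs : 0 < hs) by (unfold hs; apply Rdiv_lt_0_compat; lra).
 set (Cs := all_lists Rk (alph Rk Ms)). set (C1 := all_lists k1 (alph n1 M1)). set (C2 := all_lists k2 (alph n2 M2)).
 exists (map (decZ Rk hs Ms h1 M1 h2 M2) (list_prod Cs (list_prod (all_lists Rk C1) (all_lists Rk C2)))).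
 split.
 { unfold Cs, C1, C2. rewrite length_map, !length_prod, !length_all_lists, !length_alph. auto. }
 intros Z HZ. destruct (HP Z HZ) as [s [u [v [EZ [Hs HR0]]]]].
 destruct (vec_cover Rk Rk Ms hs s (seq 0 Rk)) as [cs [Hcs Hcs']]; auto.
 { apply seq_NoDup. } { intros i Hi; apply in_seq in Hi; lia. } { rewrite length_seq; auto. }
 { intros; apply in_seq; lia. }
 { intros i Hi. apply in_seq in Hi. unfold hs. replace (G / INR Ms * INR Ms) with G by (field; lra).
   apply Rle_trans with (norm2 Rk s); [apply entry_le_norm2; lia | auto]. }
 destruct (list_choice [] (fun r c => In c C1 /\ forall i, (i < n1)%nat -> dec h1 M1 c i = tr h1 (u r i)) Rk) as [lu [Hlu Hlu']].
 { intros r Hr. destruct (HR0 r Hr) as [_ [_ [[S [? [? [? [? [? _]]]]]] _]]].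
   eapply vec_cover; eauto. }
 destruct (list_choice [] (fun r c => In c C2 /\ forall i, (i < n2)%nat -> dec h2 M2 c i = tr h2 (v r i)) Rk) as [lv [Hlv Hlv']].
 { intros r Hr. destruct (HR0 r Hr) as [_ [_ [_ [S [? [? [? [? [? _]]]]]]]]].
   eapply vec_cover; eauto. }
 exists (decZ Rk hs Ms h1 M1 h2 M2 (cs, (lu, lv))). split.
 { apply in_map. apply in_prod; auto. apply in_prod.
   apply nth_all_lists with []; auto. intros; apply Hlu'; auto.
   apply nth_all_lists with []; auto. intros; apply Hlv'; auto. }
 rewrite (frob_ext n1 n2 _ (fun i j => fsum Rk (fun r => s r * u r i * v r j - tr hs (s r) * tr h1 (u r i) * tr h2 (v r j)))).
 2: { intros i j Hi Hj. subst Z. unfold decZ, rank_sum. simpl. rewrite <- fsum_minus. apply fsum_ext. intros r Hr.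
      rewrite Hcs' by auto. destruct (Hlu' r Hr) as [_ E1]. destruct (Hlv' r Hr) as [_ E2]. rewrite E1, E2 by auto. auto. }
 eapply Rle_trans. apply frob_fsum.
 eapply Rle_trans. apply fsum_le. intros r Hr.
 destruct (HR0 r Hr) as [Hu [Hv [[S1 [_ [_ [_ [_ [_ F1]]]]]] [S2 [_ [_ [_ [_ [_ F2]]]]]]]]].
 apply (rank1_err n1 n2 (s r) (tr hs (s r)) (u r) (fun i => tr h1 (u r i)) (v r) (fun j => tr h2 (v r j)) hs e1 e2); auto.
 - apply tr_err; auto.
 - apply tr_abs; auto.
 - rewrite <- Hu. apply norm2_le. intros; apply tr_abs; auto.
 - rewrite fsum_plus, fsum_const.
   rewrite (fsum_ext _ _ (fun r => (e1 + e2) * Rabs (s r))) by (intros; ring). rewrite fsum_scal.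
   pose proof (sum_abs_le Rk s). pose proof (sqrt_pos (INR Rk)).
   assert (fsum Rk (fun r => Rabs (s r)) <= sqrt (INR Rk) * G) by (eapply Rle_trans; eauto; apply Rmult_le_compat_l; auto).
   unfold hs. nra.
Qed.

Lemma least_exists (P : nat -> Prop) : (exists k, P k) -> exists k, P k /\ forall k', P k' -> (k <= k')%nat.
Proof.
 intros [k Hk]. revert Hk. induction k as [k IH] using (well_founded_induction lt_wf). intros Hk.
 destruct (classic (exists k', P k' /\ (k' < k)%nat)) as [[k' [H1 H2]]|Hn].
 - apply (IH k'); auto.
 - exists k. split; auto. intros k' Hk'. destruct (Nat.lt_ge_cases k' k); auto. exfalso; apply Hn; eauto.
Qed.

Lemma covnum_spec n1 n2 M e : (exists k, covers n1 n2 M e k) ->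
  covers n1 n2 M e (covnum n1 n2 M e) /\ forall k', covers n1 n2 M e k' -> (covnum n1 n2 M e <= k')%nat.
Proof.
 intros H. unfold covnum. apply epsilon_spec. apply least_exists; auto.
Qed.

Lemma covers_mono n1 n2 M e e' k : covers n1 n2 M e k -> e <= e' -> covers n1 n2 M e' k.
Proof.
 intros [c [Hl Hc]] He. exists c. split; auto. intros Z HZ. destruct (Hc Z HZ) as [x [Hx Hd]]. exists x; split; auto. lra.
Qed.

Lemma covnum_le n1 n2 M e k : covers n1 n2 M e k -> (covnum n1 n2 M e <= k)%nat.
Proof. intros H. apply (covnum_spec n1 n2 M e); eauto. Qed.

Lemma covnum_anti n1 n2 M e e' : (exists k, covers n1 n2 M e k) -> e <= e' -> (covnum n1 n2 M e' <= covnum n1 n2 M e)%nat.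
Proof.
 intros H He. apply covnum_le. apply covers_mono with e; auto. apply covnum_spec; auto.
Qed.

Lemma mono_ex_RInt (F : nat -> R) N : forall (h : R -> nat) a b, a <= b ->
  (forall x y, a <= x -> x <= y -> y <= b -> (h y <= h x)%nat) -> (h a <= N)%nat ->
  ex_RInt (fun x => F (h x)) a b.
Proof.
 induction N as [|N IH]; intros h a b Hab Hm Ha.
 - apply ex_RInt_ext with (fun _ => F 0%nat). 2: apply ex_RInt_const.
   intros x Hx. rewrite Rmin_left, Rmax_right in Hx by auto.
   assert (h x <= h a)%nat by (apply Hm; lra). f_equal. lia.
 - set (E := fun x => a <= x <= b /\ h x = h a).
   destruct (completeness E) as [c [Hub Hlub]].
   { exists b. intros x [Hx _]. lra. }
   { exists a. split; auto. lra. }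
   assert (Hac : a <= c) by (apply Hub; split; auto; lra).
   assert (Hcb : c <= b) by (apply Hlub; intros x [Hx _]; lra).
   apply ex_RInt_Chasles_0 with c; [lra| |].
   + apply ex_RInt_ext with (fun _ => F (h a)). 2: apply ex_RInt_const.
     intros x Hx. rewrite Rmin_left, Rmax_right in Hx by auto.
     destruct (classic (exists y, E y /\ x < y)) as [[y [[Hy1 Hy2] Hxy]]|Hn].
     * assert (h y <= h x)%nat by (apply Hm; lra). assert (h x <= h a)%nat by (apply Hm; lra).
       f_equal. lia.
     * exfalso. assert (c <= x). { apply Hlub. intros y Hy. destruct (Rle_lt_dec y x); auto. exfalso; apply Hn; eauto. }
       lra.
   + set (h' := fun x => if Rle_dec x c then N else h x).
     apply ex_RInt_ext with (fun x => F (h' x)).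
     { intros x Hx. rewrite Rmin_left, Rmax_right in Hx by auto. unfold h'.
       destruct (Rle_dec x c); auto. lra. }
     assert (Hgt : forall y, c < y -> y <= b -> (h y <= N)%nat).
     { intros y Hy Hyb. assert (h y <= h a)%nat by (apply Hm; lra).
       assert (h y <> h a). { intro Ee. assert (y <= c) by (apply Hub; split; auto; lra). lra. }
       lia. }
     apply IH; auto.
     * intros x y Hx Hxy Hy. unfold h'. destruct (Rle_dec y c); destruct (Rle_dec x c); try lra; auto.
       apply Hgt; lra. apply Hm; lra.
     * unfold h'. destruct (Rle_dec c c); lra || lia.
Qed.

Lemma pow2_pos k : 0 < 2 ^ k.
Proof. apply pow_lt; lra. Qed.

Lemma fsumS n f : fsum (S n) f = fsum n f + f n.
Proof. reflexivity. Qed.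

Lemma dudley (g : R -> R) E (bnd : nat -> R) : 0 < E ->
  (forall x, 0 <= g x) ->
  (forall x y, 0 < x -> x <= y -> g y <= g x) ->
  (forall a b, 0 < a -> a <= b -> ex_RInt g a b) ->
  (forall k, g (E / 2 ^ (S k)) <= bnd k) ->
  forall K a, E / 2 ^ K <= a -> a <= E ->
  RInt g a E <= fsum K (fun k => bnd k * (E / 2 ^ (S k))).
Proof.
 intros HE Hg0 Hgm Hint Hb K. induction K; intros a H1 H2.
 - simpl in H1. replace a with E by lra. rewrite RInt_point. simpl. unfold zero; simpl. lra.
 - rewrite fsumS. pose proof (pow2_pos K). pose proof (pow2_pos (S K)).
   assert (Hp : 0 < E / 2 ^ K) by (apply Rdiv_lt_0_compat; auto).
   assert (Hp1 : 0 < E / 2 ^ S K) by (apply Rdiv_lt_0_compat; auto).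
   assert (Hrel : E / 2 ^ S K = (E / 2 ^ K) / 2) by (simpl; field; lra).
   assert (0 <= bnd K) by (eapply Rle_trans; [apply Hg0 | apply Hb]).
   assert (0 <= bnd K * (E / 2 ^ S K)) by nra.
   destruct (Rle_lt_dec (E / 2 ^ K) a).
   + specialize (IHK a r H2). lra.
   + assert (HEp : E / 2 ^ K <= E). { apply Rmult_le_reg_r with (2 ^ K); auto. unfold Rdiv. rewrite Rmult_assoc, Rinv_l by lra.
       assert (1 <= 2 ^ K) by (apply pow_R1_Rle; lra). nra. }
     rewrite <- (RInt_Chasles g a (E / 2 ^ K) E).
     2: apply Hint; lra. 2: apply Hint; lra.
     specialize (IHK (E / 2 ^ K) (Rle_refl _) HEp).
     assert (RInt g a (E / 2 ^ K) <= RInt (fun _ => bnd K) a (E / 2 ^ K)).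
     { apply RInt_le. lra. apply Hint; lra. apply ex_RInt_const.
       intros x Hx. apply Rle_trans with (g (E / 2 ^ S K)). apply Hgm; lra. apply Hb. }
     rewrite RInt_const in H5. unfold scal in H5; simpl in H5. unfold mult in H5; simpl in H5.
     change (plus (RInt g a (E / 2 ^ K)) (RInt g (E / 2 ^ K) E)) with (RInt g a (E / 2 ^ K) + RInt g (E / 2 ^ K) E).
     assert (E / 2 ^ K - a <= E / 2 ^ S K) by lra.
     assert ((E / 2 ^ K - a) * bnd K <= bnd K * (E / 2 ^ S K)) by (rewrite Rmult_comm; apply Rmult_le_compat_l; lra). lra.
Qed.

Definition Gf (A : R) (k0 k : nat) : R := if Nat.leb k k0 then 4 ^ k * (A + INR k0) else 4 ^ k0 * (A + INR k).

Lemma telescope (f Q : nat -> R) c K : (forall k, f k <= c * (Q k - Q (S k))) -> fsum K f <= c * (Q 0%nat - Q K).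
Proof. induction K; intros H. simpl. lra. rewrite fsum_S. specialize (IHK H). specialize (H K). lra. Qed.

Definition Pp (j : nat) : R := (2 * INR j + 4) / 2 ^ j.
Definition Qq (k0 k : nat) : R := INR (k0 + 1 - k) + Pp (k - k0).

Lemma Pp_diff j : Pp j - Pp (S j) = INR (j + 1) / 2 ^ j.
Proof. unfold Pp. rewrite S_INR, plus_INR. simpl. field. apply pow_nonzero. lra. Qed.

Lemma Pp_pos j : 0 <= Pp j.
Proof. unfold Pp. apply Rmult_le_pos. pose proof (pos_INR j). lra. left; apply Rinv_0_lt_compat, pow_lt; lra. Qed.

Lemma sqrt_4pow k X : 0 <= X -> sqrt (4 ^ k * X) = 2 ^ k * sqrt X.
Proof.
 intros HX. rewrite sqrt_mult_alt by (apply pow_le; lra).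
 replace (4 ^ k) with ((2 ^ k) ^ 2) by (rewrite <- pow_mult, Nat.mul_comm, pow_mult; f_equal; lra).
 rewrite sqrt_pow2; auto. apply pow_le; lra.
Qed.

Lemma sumG A k0 K : 1 <= A ->
  fsum K (fun k => sqrt (Gf A k0 k) / 2 ^ (S k)) <= / 2 * sqrt (A + INR k0) * INR (k0 + 5).
Proof.
 intros HA. pose proof (pos_INR k0). set (c := / 2 * sqrt (A + INR k0)).
 assert (Hc : 0 <= c) by (unfold c; apply Rmult_le_pos; [lra|apply sqrt_pos]).
 eapply Rle_trans. apply (telescope _ (Qq k0) c).
 2: { unfold Qq. pose proof (pos_INR (k0 + 1 - K)). pose proof (Pp_pos (K - k0)).
      replace (k0 + 1 - 0)%nat with (k0 + 1)%nat by lia. replace (0 - k0)%nat with 0%nat by lia.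
      unfold Pp at 1. simpl (INR 0). rewrite plus_INR. replace (INR (k0 + 5)) with (INR k0 + 5) by (rewrite plus_INR; simpl; ring).
      simpl. apply Rmult_le_compat_l; auto. lra. }
 intros k. unfold Gf, Qq. destruct (Nat.leb_spec k k0).
 - rewrite sqrt_4pow by lra.
   replace (sqrt (A + INR k0)) with (2 * c) by (unfold c; field).
   replace (2 ^ k * (2 * c) / 2 ^ S k) with c by (simpl; field; apply pow_nonzero; lra).
   replace (k - k0)%nat with 0%nat by lia.
   assert (INR (k0 + 1 - k) = INR (k0 + 1 - S k) + 1).
   { replace (k0 + 1 - k)%nat with (S (k0 + 1 - S k)) by lia. rewrite S_INR. auto. }
   assert (Pp (S k - k0) <= Pp 0).
   { destruct (Nat.eq_dec k k0). subst. replace (S k0 - k0)%nat with 1%nat by lia. unfold Pp. simpl. lra.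
     replace (S k - k0)%nat with 0%nat by lia. lra. }
   nra.
 - rewrite sqrt_4pow by (pose proof (pos_INR k); lra).
   replace (k0 + 1 - k)%nat with 0%nat by lia. replace (k0 + 1 - S k)%nat with 0%nat by lia.
   replace (S k - k0)%nat with (S (k - k0)) by lia.
   set (j := (k - k0)%nat). replace k with (k0 + j)%nat by (unfold j; lia).
   replace (k0 + j - k0)%nat with j by lia. simpl (INR 0). replace (0 + Pp j - (0 + Pp (S j))) with (Pp j - Pp (S j)) by ring. rewrite Pp_diff.
   assert (Hs : sqrt (A + INR (k0 + j)) <= sqrt (A + INR k0) * INR (j + 1)).
   { rewrite plus_INR, plus_INR. simpl. pose proof (pos_INR j).
     rewrite <- (sqrt_pow2 (INR j + 1)) by lra. rewrite <- sqrt_mult_alt by lra. apply sqrt_le_1_alt. nra. }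
   unfold c.
   assert (0 < 2 ^ k0) by (apply pow_lt; lra). assert (0 < 2 ^ j) by (apply pow_lt; lra).
   replace (2 ^ k0 * sqrt (A + INR (k0 + j)) / 2 ^ S (k0 + j)) with (/ 2 * sqrt (A + INR (k0 + j)) / 2 ^ j)
     by (replace (2 ^ S (k0 + j)) with (2 * (2 ^ k0 * 2 ^ j)) by (rewrite <- pow_add; reflexivity); field; lra).
   unfold Rdiv.
   apply Rle_trans with (/ 2 * (sqrt (A + INR k0) * INR (j + 1)) * / 2 ^ j).
   apply Rmult_le_compat_r. left; apply Rinv_0_lt_compat; auto. lra.
   right. field. lra.
Qed.

Lemma ln_INR_mono a b : (a <= b)%nat -> ln (INR a) <= ln (INR b).
Proof.
 intros H. destruct a.
 - assert (Hln0 : ln 0 = 0) by (unfold ln; destruct Rlt_dec as [r|r]; [exfalso; apply (Rlt_irrefl 0); exact r|reflexivity]).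
   rewrite INR_0, Hln0. destruct b. rewrite INR_0, Hln0; lra.
   rewrite <- ln_1. apply ln_le; [lra|]. apply (le_INR 1); lia.
 - apply ln_le. apply (lt_INR 0); lia. apply le_INR; auto.
Qed.

Lemma pow2_ge_INR K : INR K <= 2 ^ K.
Proof. induction K. simpl; lra. rewrite S_INR. simpl. assert (1 <= 2 ^ K) by (apply pow_R1_Rle; lra). lra. Qed.

Lemma exists_K x : exists K : nat, x <= INR K.
Proof.
 destruct (archimed (Rabs x)) as [H1 _]. exists (Z.to_nat (up (Rabs x))).
 pose proof (Rabs_pos x). pose proof (Rle_abs x).
 assert (0 <= up (Rabs x))%Z by (apply le_IZR; lra).
 rewrite INR_IZR_INZ, Z2Nat.id by auto. lra.
Qed.

Lemma exists_K2 E d : 0 < E -> 0 < d -> exists K : nat, E / 2 ^ K <= d.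
Proof.
 intros HE Hd. destruct (exists_K (E / d)) as [K HK]. exists K.
 pose proof (pow2_ge_INR K). pose proof (pow_lt 2 K ltac:(lra)).
 apply Rmult_le_reg_r with (2 ^ K); auto. unfold Rdiv. rewrite Rmult_assoc, Rinv_l by lra.
 apply Rle_trans with (E / d * d). right; field; lra. nra.
Qed.

Lemma finish n1 n2 (P : (nat -> nat -> R) -> Prop) T m Cc (G : nat -> R) Bsum target :
  0 < T -> (1 <= m)%nat -> 0 <= Cc -> 
  (forall k, exists c, covers n1 n2 P (T / 2 ^ (S k)) c /\ ln (INR c) <= Cc * G k) ->
  (forall k, 0 <= G k) ->
  (forall K, fsum K (fun k => sqrt (G k) / 2 ^ (S k)) <= Bsum) ->
  T / sqrt (INR m) * sqrt Cc * Bsum <= target ->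
  improper_int_le (fun eps => sqrt (ln (INR (covnum n1 n2 P (sqrt (INR m) * eps))))) (T / sqrt (INR m)) target.
Proof.
 intros HT Hm HCc Hlev HG Hsum Htarget.
 assert (Hmr : 1 <= INR m) by (apply (le_INR 1); auto).
 assert (Hsm : 0 < sqrt (INR m)) by (apply sqrt_lt_R0; lra).
 set (E := T / sqrt (INR m)).
 assert (HE : 0 < E) by (apply Rdiv_lt_0_compat; auto).
 assert (Hex : forall rho, 0 < rho -> exists c, covers n1 n2 P rho c).
 { intros rho Hr. destruct (exists_K2 T rho HT Hr) as [K HK]. destruct (Hlev K) as [c [Hc _]].
   exists c. apply covers_mono with (T / 2 ^ S K); auto. eapply Rle_trans; [|apply HK].
   simpl. pose proof (pow_lt 2 K ltac:(lra)). unfold Rdiv. apply Rmult_le_compat_l; [lra|].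
   apply Rinv_le_contravar; lra. }
 set (h := fun eps => covnum n1 n2 P (sqrt (INR m) * eps)).
 set (f := fun eps => sqrt (ln (INR (h eps)))).
 assert (Hmono : forall x y, 0 < x -> x <= y -> (h y <= h x)%nat).
 { intros x y Hx Hxy. unfold h. apply covnum_anti. apply Hex. nra. nra. }
 assert (Hf0 : forall x, 0 <= f x) by (intros; apply sqrt_pos).
 assert (Hfm : forall x y, 0 < x -> x <= y -> f y <= f x).
 { intros x y Hx Hxy. unfold f. apply sqrt_le_1_alt. apply ln_INR_mono. apply Hmono; auto. }
 assert (Hint : forall a b, 0 < a -> a <= b -> ex_RInt f a b).
 { intros a b Ha Hab. unfold f. apply (mono_ex_RInt (fun k => sqrt (ln (INR k))) (h a) h a b); auto.
   intros x y Hx Hxy Hy. apply Hmono; lra. }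
 assert (Hb : forall k, f (E / 2 ^ S k) <= sqrt Cc * sqrt (G k)).
 { intros k. destruct (Hlev k) as [c [Hc Hlc]]. unfold f, h.
   replace (sqrt (INR m) * (E / 2 ^ S k)) with (T / 2 ^ S k) by (assert (2 ^ S k <> 0) by (apply pow_nonzero; lra); unfold E; field; split; lra).
   rewrite <- sqrt_mult_alt by auto. apply sqrt_le_1_alt. eapply Rle_trans; [|apply Hlc].
   apply ln_INR_mono. apply covnum_le; auto. }
 intros d [Hd1 Hd2].
 assert (Hpr : Riemann_integrable f d (T / sqrt (INR m))) by (apply ex_RInt_Reals_0; apply Hint; unfold E in *; lra).
 exists Hpr. rewrite <- RInt_Reals.
 destruct (exists_K2 E d HE Hd1) as [K HK].
 eapply Rle_trans. apply (dudley f E (fun k => sqrt Cc * sqrt (G k)) HE Hf0 Hfm Hint Hb K d HK). lra.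
 eapply Rle_trans; [|apply Htarget]. fold E.
 rewrite (fsum_ext _ _ (fun k => (E * sqrt Cc) * (sqrt (G k) / 2 ^ S k))) by (intros; unfold Rdiv; ring).
 rewrite fsum_scal. apply Rmult_le_compat_l. pose proof (sqrt_pos Cc). nra. auto.
Qed.

Lemma ln2_lt1 : ln 2 < 1.
Proof. rewrite <- ln_exp. apply ln_increasing. lra. pose proof (exp_ineq1 1 ltac:(lra)). lra. Qed.
Lemma ln2_gt : / 2 < ln 2.
Proof. exact ln_lt_2. Qed.

Lemma INR_pos_nat a : (0 < a)%nat -> 0 < INR a.
Proof. intros; apply (lt_INR 0); auto. Qed.

Lemma ln_INR_mult a b : (0 < a)%nat -> (0 < b)%nat -> ln (INR (a * b)) = ln (INR a) + ln (INR b).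
Proof. intros. rewrite mult_INR. apply ln_mult; apply INR_pos_nat; auto. Qed.

Lemma ln_INR_pow a e : (0 < a)%nat -> ln (INR (a ^ e)) = INR e * ln (INR a).
Proof. intros. rewrite pow_INR. apply ln_pow. apply INR_pos_nat; auto. Qed.

Lemma ln_INR_nonneg a : ln (INR a) >= 0 \/ a = 0%nat.
Proof. destruct a. auto. left. rewrite <- ln_1. apply Rle_ge. apply ln_le. lra. apply (le_INR 1); lia. Qed.

Lemma ln_INR_ge0 a : (0 < a)%nat -> 0 <= ln (INR a).
Proof. intros. destruct (ln_INR_nonneg a); lra || lia. Qed.

Lemma ln_bound_pow2 x a e : (0 < x)%nat -> (0 < a)%nat -> (x <= a * 2 ^ e)%nat -> ln (INR x) <= ln (INR a) + INR e.
Proof.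
 intros Hx Ha Hle. eapply Rle_trans. apply ln_le. apply INR_pos_nat; auto. apply le_INR; eauto.
 rewrite ln_INR_mult; try lia. rewrite ln_INR_pow by lia. replace (INR 2) with 2 by (simpl; lra).
 pose proof ln2_lt1. pose proof (pos_INR e). nra.
Qed.

Lemma pow_INR2 k : INR (2 ^ k) = 2 ^ k.
Proof. rewrite pow_INR. replace (INR 2) with 2 by (simpl; lra). auto. Qed.

Lemma rad_ok Rk G Ms e1 e2 k : 1 <= INR Rk -> 0 < G -> INR Ms = 3 * INR Rk * 2 ^ (S k) ->
  0 <= e1 <= / (3 * 2 ^ S k) -> 0 <= e2 <= / (3 * 2 ^ S k) ->
  INR Rk * (G / INR Ms) + sqrt (INR Rk) * G * (e1 + e2) <= G * sqrt (INR Rk) / 2 ^ S k.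
Proof.
 intros HR HG HMs H1 H2. rewrite HMs.
 pose proof (pow_lt 2 (S k) ltac:(lra)). set (q := 2 ^ S k) in *.
 assert (Hs : 1 <= sqrt (INR Rk)) by (rewrite <- sqrt_1; apply sqrt_le_1_alt; lra).
 replace (INR Rk * (G / (3 * INR Rk * q))) with (G / (3 * q)) by (field; lra).
 assert (e1 + e2 <= 2 / (3 * q)) by (unfold Rdiv; lra).
 assert (sqrt (INR Rk) * G * (e1 + e2) <= sqrt (INR Rk) * G * (2 / (3 * q))) by (apply Rmult_le_compat_l; nra).
 assert (G / (3 * q) <= sqrt (INR Rk) * G / (3 * q)).
 { unfold Rdiv. apply Rmult_le_compat_r. left; apply Rinv_0_lt_compat; lra. nra. }
 replace (G * sqrt (INR Rk) / q) with (sqrt (INR Rk) * G / (3 * q) + sqrt (INR Rk) * G * (2 / (3 * q))) by (field; lra).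
 lra.
Qed.

Lemma pos_pow a e : (0 < a)%nat -> (0 < a ^ e)%nat.
Proof. intros. apply Nat.neq_0_lt_0, Nat.pow_nonzero. lia. Qed.

Lemma level_gen n n1 n2 Rk G k (P : (nat -> nat -> R) -> Prop) k1 M1 h1 e1 k2 M2 h2 e2 B1 B2 :
 (0 < n1)%nat -> (0 < n2)%nat -> (1 <= Rk)%nat -> (Rk <= n)%nat -> 0 < G -> 0 < h1 -> 0 < h2 ->
 0 <= e1 <= / (3 * 2 ^ S k) -> 0 <= e2 <= / (3 * 2 ^ S k) ->
 (forall Z, P Z -> exists s u v, Z = rank_sum Rk s u v /\ norm2 Rk s <= G /\
     forall r, (r < Rk)%nat -> norm2 n1 (u r) = 1 /\ norm2 n2 (v r) = 1 /\
        FactorOK n1 k1 h1 M1 e1 (u r) /\ FactorOK n2 k2 h2 M2 e2 (v r)) ->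
 INR k1 * ln (INR (n1 * (2 * M1 + 1))) <= B1 ->
 INR k2 * ln (INR (n2 * (2 * M2 + 1))) <= B2 ->
 exists c, covers n1 n2 P (G * sqrt (INR Rk) / 2 ^ S k) c /\
   ln (INR c) <= INR Rk * (2 * ln (INR n) + INR k + 4) + INR Rk * B1 + INR Rk * B2.
Proof.
 intros Hn1 Hn2 HR HRn HG Hh1 Hh2 He1 He2 HP HB1 HB2. pose proof He1 as [He1a He1b]. pose proof He2 as [He2a He2b].
 set (Ms := (3 * Rk * 2 ^ S k)%nat).
 assert (HMs : (1 <= Ms)%nat). { unfold Ms. pose proof (Nat.pow_nonzero 2 (S k)). nia. }
 eexists. split.
 - eapply covers_mono. apply (mat_cover n1 n2 Rk G Ms k1 M1 h1 e1 k2 M2 h2 e2 P); auto; lia || lra.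
   apply rad_ok; auto. apply (le_INR 1); auto. unfold Ms. rewrite !mult_INR, pow_INR2. simpl (INR 3). ring.
 - pose proof (Nat.pow_nonzero 2 (S k)) as Hp.
   assert (HR0 : (0 < Rk)%nat) by lia.
   rewrite ln_INR_mult.
   2: { apply pos_pow. nia. }
   2: { apply Nat.mul_pos_pos; repeat apply pos_pow; nia. }
   rewrite ln_INR_mult.
   2, 3: repeat apply pos_pow; nia.
   rewrite !ln_INR_pow by (repeat apply pos_pow; nia).
   assert (Hl : ln (INR (Rk * (2 * Ms + 1))) <= 2 * ln (INR n) + INR k + 4).
   { rewrite ln_INR_mult by lia.
     assert (ln (INR (2 * Ms + 1)) <= ln (INR Rk) + INR (S (S (S (S k))))).
     { apply ln_bound_pow2; try lia. unfold Ms. simpl. set (q := 2 ^ k) in *. simpl in Hp. nia. }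
     pose proof (ln_INR_mono Rk n HRn). rewrite !S_INR in H. lra. }
   pose proof (pos_INR Rk).
   assert (INR Rk * ln (INR (Rk * (2 * Ms + 1))) <= INR Rk * (2 * ln (INR n) + INR k + 4)) by (apply Rmult_le_compat_l; auto).
   assert (INR Rk * (INR k1 * ln (INR (n1 * (2 * M1 + 1)))) <= INR Rk * B1) by (apply Rmult_le_compat_l; auto).
   assert (INR Rk * (INR k2 * ln (INR (n2 * (2 * M2 + 1)))) <= INR Rk * B2) by (apply Rmult_le_compat_l; auto).
   lra.
Qed.

Lemma sqrt_le_self x : 1 <= x -> sqrt x <= x.
Proof. intros. rewrite <- (sqrt_pow2 x) at 2 by lra. apply sqrt_le_1_alt. nra. Qed.

Lemma sqrt_ge1 x : 1 <= x -> 1 <= sqrt x.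
Proof. intros. rewrite <- sqrt_1. apply sqrt_le_1_alt. lra. Qed.

Lemma pow_INR4 k : INR (4 ^ k) = 4 ^ k.
Proof. rewrite pow_INR. replace (INR 4) with 4 by (simpl; lra). auto. Qed.

Lemma four_pow k : 4 ^ k = (2 ^ k) ^ 2.
Proof. rewrite <- pow_mult, Nat.mul_comm, pow_mult. f_equal. lra. Qed.

Lemma ln_le_L a n : (0 < a)%nat -> (a <= n)%nat -> ln (INR a) <= ln (INR n).
Proof. intros. apply ln_INR_mono; auto. Qed.

Lemma fac_S n nm s k : (1 <= s <= n)%nat -> (n <= nm)%nat ->
  let M := (3 * s * 2 ^ S k)%nat in
  (forall x, supp_le n s x -> norm2 n x = 1 -> FactorOK n s (1 / INR M) M (sqrt (INR s) / INR M) x) /\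
  0 < 1 / INR M /\
  0 <= sqrt (INR s) / INR M <= / (3 * 2 ^ S k) /\
  INR s * ln (INR (n * (2 * M + 1))) <= INR s * (2 * ln (INR nm) + INR k + 4).
Proof.
 intros Hs Hn M. pose proof (Nat.pow_nonzero 2 (S k)) as Hp.
 assert (HM1 : (1 <= M)%nat) by (unfold M; nia).
 assert (HMr : INR M = 3 * INR s * 2 ^ S k) by (unfold M; rewrite !mult_INR, pow_INR2; simpl (INR 3); ring).
 assert (Hsr : 1 <= INR s) by (apply (le_INR 1); lia).
 pose proof (pow_lt 2 (S k) ltac:(lra)).
 split; [intros; apply factor_S; auto|]. split. { rewrite HMr. apply Rdiv_lt_0_compat; [lra|]. nra. }
 split. { split. apply Rmult_le_pos. apply sqrt_pos. left. apply Rinv_0_lt_compat. rewrite HMr. nra.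
   rewrite HMr. pose proof (sqrt_le_self (INR s) Hsr). pose proof (sqrt_pos (INR s)).
   apply Rle_trans with (INR s / (3 * INR s * 2 ^ S k)). unfold Rdiv. apply Rmult_le_compat_r; auto.
   left; apply Rinv_0_lt_compat; nra. right. field. lra. }
 apply Rmult_le_compat_l. lra.
 rewrite ln_INR_mult by lia.
 assert (ln (INR (2 * M + 1)) <= ln (INR s) + INR (S (S (S (S k))))).
 { apply ln_bound_pow2; try lia. unfold M. simpl. simpl in Hp. set (q := 2 ^ k) in *. nia. }
 pose proof (ln_le_L n nm ltac:(lia) Hn). pose proof (ln_le_L s nm ltac:(lia) ltac:(lia)).
 rewrite !S_INR in H0. lra.
Qed.

Definition Hf (L : R) (k0 k : nat) : R :=
  if Nat.leb k k0 then 4 ^ k * (2 * L + 2 * INR k0 + 7) else 4 ^ k0 * (2 * L + INR k + 4).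

Lemma fac_K n nm s k k0 : (1 <= s <= n)%nat -> (n <= nm)%nat -> (nm < 2 ^ k0)%nat ->
  exists k1 M1 h1 e1,
  (forall x, Kset n s x -> norm2 n x = 1 -> FactorOK n k1 h1 M1 e1 x) /\
  0 < h1 /\ 0 <= e1 <= / (3 * 2 ^ S k) /\
  INR k1 * ln (INR (n * (2 * M1 + 1))) <= 36 * INR s * Hf (ln (INR nm)) k0 k.
Proof.
 intros Hs Hn Hk0.
 assert (Hsr : 1 <= INR s) by (apply (le_INR 1); lia).
 pose proof (pow_lt 2 (S k) ltac:(lra)).
 pose proof (ln_le_L n nm ltac:(lia) Hn) as Hln. pose proof (ln_le_L s nm ltac:(lia) ltac:(lia)) as Hls.
 pose proof (ln_INR_ge0 s ltac:(lia)) as Hls0.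
 unfold Hf. destruct (Nat.leb_spec k k0).
 - set (M1 := (9 * s * 4 ^ S k)%nat).
   set (h1 := / (9 * sqrt (INR s) * 4 ^ S k)).
   pose proof (sqrt_ge1 _ Hsr) as Hsq. pose proof (pow_lt 4 (S k) ltac:(lra)) as H4.
   assert (HMr : INR M1 = 9 * INR s * 4 ^ S k) by (unfold M1; rewrite !mult_INR, pow_INR4; simpl (INR 9); ring).
   assert (Hh1 : 0 < h1) by (unfold h1; apply Rinv_0_lt_compat; nra).
   assert (Hss : sqrt (INR s) * sqrt (INR s) = INR s) by (apply sqrt_sqrt; lra).
   assert (Hhk : h1 * INR M1 = sqrt (INR s)).
   { rewrite HMr. unfold h1. rewrite <- Hss at 2. field. split; lra. }
   exists M1, M1, h1, (sqrt (h1 * sqrt (INR s))). split; [|split; [auto|split]].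
   + intros x Hx Hx1. apply factor_KA; auto; lra.
   + split. apply sqrt_pos.
     replace (h1 * sqrt (INR s)) with ((/ (3 * 2 ^ S k)) ^ 2).
     rewrite sqrt_pow2. lra. left; apply Rinv_0_lt_compat; lra.
     unfold h1. rewrite four_pow. field. split; lra.
   + rewrite HMr. rewrite ln_INR_mult by (unfold M1; try lia; pose proof (pos_pow 4 (S k)); lia).
     assert (HB : ln (INR (2 * M1 + 1)) <= ln (INR s) + INR (2 * k + 7)).
     { apply ln_bound_pow2; try lia. unfold M1.
       replace (2 ^ (2 * k + 7))%nat with (32 * 4 ^ S k)%nat.
       pose proof (pos_pow 4 (S k)). set (q := (4 ^ S k)%nat) in *. nia.
       replace (2 * k + 7)%nat with (2 * S k + 5)%nat by lia. rewrite Nat.pow_add_r, Nat.pow_mul_r. simpl (2 ^ 2)%nat. simpl (2 ^ 5)%nat. ring. }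
     rewrite (plus_INR (2 * k) 7), (mult_INR 2 k) in HB. replace (INR 2) with 2 in HB by (simpl; lra). replace (INR 7) with 7 in HB by (simpl; lra).
     assert (INR k <= INR k0) by (apply le_INR; auto).
     replace (4 ^ S k) with (4 * 4 ^ k) by (simpl; ring).
     pose proof (pow_lt 4 k ltac:(lra)).
     assert (ln (INR n) + ln (INR (2 * M1 + 1)) <= 2 * ln (INR nm) + 2 * INR k0 + 7) by lra.
     assert (0 <= ln (INR n) + ln (INR (2 * M1 + 1))) by (pose proof (ln_INR_ge0 n ltac:(lia)); pose proof (ln_INR_ge0 (2 * M1 + 1) ltac:(lia)); lra).
     assert (0 <= 36 * INR s * 4 ^ k) by nra.
     replace (9 * INR s * (4 * 4 ^ k) * (ln (INR n) + ln (INR (2 * M1 + 1)))) with ((36 * INR s * 4 ^ k) * (ln (INR n) + ln (INR (2 * M1 + 1)))) by ring.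
     replace (36 * INR s * (4 ^ k * (2 * ln (INR nm) + 2 * INR k0 + 7))) with ((36 * INR s * 4 ^ k) * (2 * ln (INR nm) + 2 * INR k0 + 7)) by ring.
     apply Rmult_le_compat_l; auto.
 - set (M1 := (3 * n * 2 ^ S k)%nat).
   pose proof (Nat.pow_nonzero 2 (S k)) as Hp.
   assert (HM1 : (1 <= M1)%nat) by (unfold M1; nia).
   assert (HMr : INR M1 = 3 * INR n * 2 ^ S k) by (unfold M1; rewrite !mult_INR, pow_INR2; simpl (INR 3); ring).
   assert (Hnr : 1 <= INR n) by (apply (le_INR 1); lia).
   exists n, M1, (1 / INR M1), (sqrt (INR n) / INR M1). split; [|split; [|split]].
   + intros x Hx Hx1. apply factor_KB; auto.
   + rewrite HMr. apply Rdiv_lt_0_compat; [lra|]. nra.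
   + split. apply Rmult_le_pos. apply sqrt_pos. left. apply Rinv_0_lt_compat. rewrite HMr. nra.
     rewrite HMr. pose proof (sqrt_le_self (INR n) Hnr). pose proof (sqrt_pos (INR n)).
     apply Rle_trans with (INR n / (3 * INR n * 2 ^ S k)). unfold Rdiv. apply Rmult_le_compat_r; auto.
     left; apply Rinv_0_lt_compat; nra. right. field. lra.
   + rewrite ln_INR_mult by lia.
     assert (ln (INR (2 * M1 + 1)) <= ln (INR n) + INR (S (S (S (S k))))).
     { apply ln_bound_pow2; try lia. unfold M1. simpl. simpl in Hp. set (q := 2 ^ k) in *. nia. }
     rewrite !S_INR in H1.
     assert (INR n <= INR s * 4 ^ k0).
     { apply Rle_trans with (4 ^ k0). apply Rle_trans with (2 ^ k0). rewrite <- pow_INR2. apply le_INR. lia.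
       apply pow_incr. lra. pose proof (pow_lt 4 k0 ltac:(lra)). nra. }
     assert (0 <= ln (INR n) + ln (INR (2 * M1 + 1))) by (pose proof (ln_INR_ge0 n ltac:(lia)); pose proof (ln_INR_ge0 (2 * M1 + 1) ltac:(lia)); lra).
     apply Rle_trans with (INR s * 4 ^ k0 * (2 * ln (INR nm) + INR k + 4)).
     { apply Rmult_le_compat; [apply pos_INR | lra | lra | lra]. }
     pose proof (pow_lt 4 k0 ltac:(lra)). assert (0 <= 2 * ln (INR nm) + INR k + 4) by (pose proof (pos_INR k); lra). nra.
Qed.

Lemma Gf0 A k : Gf A 0 k = A + INR k.
Proof. unfold Gf. destruct (Nat.leb_spec k 0). replace k with 0%nat by lia. simpl. ring. simpl. ring. Qed.

Lemma Gf_nonneg A k0 k : 0 <= A -> 0 <= Gf A k0 k.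
Proof. intros. unfold Gf. pose proof (pos_INR k0). pose proof (pos_INR k).
 destruct (Nat.leb k k0); apply Rmult_le_pos; try (apply pow_le; lra); lra. Qed.

Lemma level_S n1 n2 s1 s2 Rk G k : (2 <= n1)%nat -> (2 <= n2)%nat -> (1 <= s1 <= n1)%nat -> (1 <= s2 <= n2)%nat ->
  (1 <= Rk <= Nat.min n1 n2)%nat -> 1 <= G ->
  exists c, covers n1 n2 (Sset n1 n2 s1 s2 Rk G) (G * sqrt (INR Rk) / 2 ^ S k) c /\
  ln (INR c) <= (8 * (INR Rk * INR (s1 + s2))) * Gf (ln (INR (Nat.max n1 n2)) + 1) 0 k.
Proof.
 intros Hn1 Hn2 Hs1 Hs2 HR HG.
 set (nm := Nat.max n1 n2).
 destruct (fac_S n1 nm s1 k Hs1 ltac:(lia)) as [F1 [Hh1 [He1 HB1]]].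
 destruct (fac_S n2 nm s2 k Hs2 ltac:(lia)) as [F2 [Hh2 [He2 HB2]]].
 destruct (level_gen nm n1 n2 Rk G k (Sset n1 n2 s1 s2 Rk G) s1 (3 * s1 * 2 ^ S k)%nat (1 / INR (3 * s1 * 2 ^ S k)) (sqrt (INR s1) / INR (3 * s1 * 2 ^ S k))
   s2 (3 * s2 * 2 ^ S k)%nat (1 / INR (3 * s2 * 2 ^ S k)) (sqrt (INR s2) / INR (3 * s2 * 2 ^ S k))
   (INR s1 * (2 * ln (INR nm) + INR k + 4)) (INR s2 * (2 * ln (INR nm) + INR k + 4)) ltac:(lia) ltac:(lia) ltac:(lia) ltac:(lia) ltac:(lra) Hh1 Hh2 He1 He2) as [c [Hc Hl]].
 4: exists c; split; [exact Hc|].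
 { intros Z [s [u [v [EZ [Hr Hs]]]]]. exists s, u, v. split; auto. split; auto. intros r Hrr.
   destruct (Hr r Hrr) as [? [? [? ?]]]. repeat split; auto. }
 apply HB1. apply HB2.
 eapply Rle_trans. apply Hl. rewrite Gf0.
 assert (HL : 0 <= ln (INR nm)) by (apply ln_INR_ge0; lia).
 rewrite plus_INR. pose proof (pos_INR k). assert (1 <= INR Rk) by (apply (le_INR 1); lia).
 assert (1 <= INR s1) by (apply (le_INR 1); lia). assert (1 <= INR s2) by (apply (le_INR 1); lia).
 set (X := 2 * ln (INR nm) + INR k + 4).
 assert (X <= 4 * (ln (INR nm) + 1 + INR k)) by (unfold X; lra).
 assert (0 <= X) by (unfold X; lra).
 replace (INR Rk * X + INR Rk * (INR s1 * X) + INR Rk * (INR s2 * X)) with (INR Rk * (1 + INR s1 + INR s2) * X) by ring.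
 replace (8 * (INR Rk * (INR s1 + INR s2)) * (ln (INR nm) + 1 + INR k)) with ((INR Rk * (2 * (INR s1 + INR s2))) * (4 * (ln (INR nm) + 1 + INR k))) by ring.
 apply Rmult_le_compat; try nra.
Qed.

Lemma Hf_le L k0 k : 0 <= L -> Hf L k0 k <= 7 * Gf (L + 1) k0 k.
Proof.
 intros HL. unfold Hf, Gf. pose proof (pos_INR k0). pose proof (pos_INR k).
 destruct (Nat.leb k k0). pose proof (pow_lt 4 k ltac:(lra)). nra. pose proof (pow_lt 4 k0 ltac:(lra)). nra.
Qed.

Lemma Hf_ge L k0 k : 0 <= L -> 2 * L + INR k + 4 <= Hf L k0 k.
Proof.
 intros HL. unfold Hf. pose proof (pos_INR k0). pose proof (pos_INR k).
 destruct (Nat.leb_spec k k0).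
 - apply le_INR in H1. assert (1 <= 4 ^ k) by (apply pow_R1_Rle; lra). nra.
 - assert (1 <= 4 ^ k0) by (apply pow_R1_Rle; lra). nra.
Qed.

Lemma level_K n1 n2 s1 s2 Rk G k : (2 <= n1)%nat -> (2 <= n2)%nat -> (1 <= s1 <= n1)%nat -> (1 <= s2 <= n2)%nat ->
  (1 <= Rk <= Nat.min n1 n2)%nat -> 1 <= G ->
  exists c, covers n1 n2 (KRset n1 n2 s1 s2 Rk G) (G * sqrt (INR Rk) / 2 ^ S k) c /\
  ln (INR c) <= (511 * (INR Rk * INR (s1 + s2))) * Gf (ln (INR (Nat.max n1 n2)) + 1) (S (Nat.log2 (Nat.max n1 n2))) k.
Proof.
 intros Hn1 Hn2 Hs1 Hs2 HR HG.
 set (nm := Nat.max n1 n2). set (k0 := S (Nat.log2 nm)).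
 assert (Hk0 : (nm < 2 ^ k0)%nat) by (apply Nat.log2_spec; lia).
 destruct (fac_K n1 nm s1 k k0 Hs1 ltac:(lia) Hk0) as [k1 [M1 [h1 [e1 [F1 [Hh1 [He1 HB1]]]]]]].
 destruct (fac_K n2 nm s2 k k0 Hs2 ltac:(lia) Hk0) as [k2 [M2 [h2 [e2 [F2 [Hh2 [He2 HB2]]]]]]].
 destruct (level_gen nm n1 n2 Rk G k (KRset n1 n2 s1 s2 Rk G) k1 M1 h1 e1 k2 M2 h2 e2 (36 * INR s1 * Hf (ln (INR nm)) k0 k) (36 * INR s2 * Hf (ln (INR nm)) k0 k) ltac:(lia) ltac:(lia) ltac:(lia) ltac:(lia) ltac:(lra) Hh1 Hh2 He1 He2) as [c [Hc Hl]].
 { intros Z [s [u [v [EZ [Hr Hs]]]]]. exists s, u, v. split; auto. split; auto. intros r Hrr.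
   destruct (Hr r Hrr) as [? [? [? ?]]]. repeat split; auto. }
 apply HB1. apply HB2.
 exists c; split; [exact Hc|].
 eapply Rle_trans. apply Hl.
 assert (HL : 0 <= ln (INR nm)) by (apply ln_INR_ge0; lia).
 pose proof (Hf_le (ln (INR nm)) k0 k HL). pose proof (Hf_ge (ln (INR nm)) k0 k HL).
 rewrite plus_INR. assert (1 <= INR Rk) by (apply (le_INR 1); lia).
 assert (1 <= INR s1) by (apply (le_INR 1); lia). assert (1 <= INR s2) by (apply (le_INR 1); lia).
 set (Hv := Hf (ln (INR nm)) k0 k) in *. set (Gv := Gf (ln (INR nm) + 1) k0 k) in *.
 assert (0 <= Hv) by (pose proof (pos_INR k); lra).
 apply Rle_trans with (INR Rk * (73 * (INR s1 + INR s2)) * Hv).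
 - assert (INR Rk * (2 * ln (INR nm) + INR k + 4) <= INR Rk * Hv) by (apply Rmult_le_compat_l; lra).
   assert (0 <= (INR Rk * Hv) * (37 * (INR s1 + INR s2) - 1)) by (apply Rmult_le_pos; nra).
   replace (INR Rk * (73 * (INR s1 + INR s2)) * Hv) with (INR Rk * Hv + INR Rk * (36 * INR s1 * Hv) + INR Rk * (36 * INR s2 * Hv) + (INR Rk * Hv) * (37 * (INR s1 + INR s2) - 1)) by ring.
   lra.
 - replace (511 * (INR Rk * (INR s1 + INR s2)) * Gv) with (INR Rk * (73 * (INR s1 + INR s2)) * (7 * Gv)) by ring.
   apply Rmult_le_compat_l; auto. nra.
Qed.

Lemma le_sqrt_of_sq x y : 0 <= x -> x ^ 2 <= y -> x <= sqrt y.
Proof. intros Hx H. rewrite <- (sqrt_pow2 x Hx). apply sqrt_le_1_alt. auto. Qed.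

Lemma final_S G R m s L : 1 <= G -> 1 <= R -> 1 <= m -> 2 <= s -> / 2 <= L ->
  G * sqrt R / sqrt m * sqrt (8 * (R * s)) * (/ 2 * sqrt (L + 1 + 0) * 5) <= sqrt (200 * G ^ 2 * R ^ 2 * s * L / m).
Proof.
 intros HG HR Hm Hs HL.
 assert (Hsm : 0 < sqrt m) by (apply sqrt_lt_R0; lra).
 pose proof (sqrt_pos R). pose proof (sqrt_pos (8 * (R * s))). pose proof (sqrt_pos (L + 1 + 0)).
 apply le_sqrt_of_sq.
 - apply Rmult_le_pos. apply Rmult_le_pos. unfold Rdiv. apply Rmult_le_pos. nra. left; apply Rinv_0_lt_compat; auto. auto. nra.
 - replace ((G * sqrt R / sqrt m * sqrt (8 * (R * s)) * (/ 2 * sqrt (L + 1 + 0) * 5)) ^ 2)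
     with (G ^ 2 * (sqrt R)^2 * (sqrt (8 * (R * s)))^2 * (sqrt (L + 1 + 0))^2 * 25 / (4 * (sqrt m)^2)) by (field; lra).
   rewrite !pow2_sqrt by nra.
   replace (200 * G ^ 2 * R ^ 2 * s * L / m) with ((G ^ 2 * R ^ 2 * s / m) * (200 * L)) by (field; lra).
   replace (G ^ 2 * R * (8 * (R * s)) * (L + 1 + 0) * 25 / (4 * m)) with ((G ^ 2 * R ^ 2 * s / m) * (50 * (L + 1))) by (field; lra).
   apply Rmult_le_compat_l. unfold Rdiv. apply Rmult_le_pos. assert (0 <= G^2 * R^2) by nra. nra.
   left; apply Rinv_0_lt_compat; lra. lra.
Qed.

Lemma final_K G R m s L k0 : 1 <= G -> 1 <= R -> 1 <= m -> 2 <= s -> / 2 <= L -> 0 <= k0 -> k0 <= 2 * L + 1 ->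
  G * sqrt R / sqrt m * sqrt (511 * (R * s)) * (/ 2 * sqrt (L + 1 + k0) * (k0 + 5)) <= sqrt (200000 * G ^ 2 * R ^ 2 * s * L ^ 3 / m).
Proof.
 intros HG HR Hm Hs HL Hk1 Hk2.
 assert (Hsm : 0 < sqrt m) by (apply sqrt_lt_R0; lra).
 pose proof (sqrt_pos R). pose proof (sqrt_pos (511 * (R * s))). pose proof (sqrt_pos (L + 1 + k0)).
 apply le_sqrt_of_sq.
 - apply Rmult_le_pos. apply Rmult_le_pos. unfold Rdiv. apply Rmult_le_pos. nra. left; apply Rinv_0_lt_compat; auto. auto. nra.
 - replace ((G * sqrt R / sqrt m * sqrt (511 * (R * s)) * (/ 2 * sqrt (L + 1 + k0) * (k0 + 5))) ^ 2)
     with (G ^ 2 * (sqrt R)^2 * (sqrt (511 * (R * s)))^2 * (sqrt (L + 1 + k0))^2 * (k0 + 5) ^ 2 / (4 * (sqrt m)^2)) by (field; lra).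
   rewrite !pow2_sqrt by nra.
   replace (200000 * G ^ 2 * R ^ 2 * s * L ^ 3 / m) with ((G ^ 2 * R ^ 2 * s / m) * (200000 * L ^ 3)) by (field; lra).
   replace (G ^ 2 * R * (511 * (R * s)) * (L + 1 + k0) * (k0 + 5) ^ 2 / (4 * m)) with ((G ^ 2 * R ^ 2 * s / m) * (511 / 4 * ((L + 1 + k0) * (k0 + 5) ^ 2))) by (field; lra).
   apply Rmult_le_compat_l. unfold Rdiv. apply Rmult_le_pos. assert (0 <= G^2 * R^2) by nra. nra.
   left; apply Rinv_0_lt_compat; lra.
   assert (L + 1 + k0 <= 7 * L) by lra. assert (k0 + 5 <= 14 * L) by lra.
   assert ((k0 + 5) ^ 2 <= (14 * L) ^ 2) by (apply pow_incr; lra).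
   assert ((L + 1 + k0) * (k0 + 5) ^ 2 <= 7 * L * (14 * L) ^ 2) by (apply Rmult_le_compat; try nra).
   nra.
Qed.

Lemma L_ge n1 n2 : (2 <= n1)%nat -> / 2 <= ln (INR (Nat.max n1 n2)).
Proof.
 intros H. pose proof ln2_gt. apply Rle_trans with (ln 2). lra.
 apply ln_le. lra. replace 2 with (INR 2) by (simpl; lra). apply le_INR. lia.
Qed.

Lemma k0_bound nm : (2 <= nm)%nat -> INR (S (Nat.log2 nm)) <= 2 * ln (INR nm) + 1.
Proof.
 intros H. destruct (Nat.log2_spec nm ltac:(lia)) as [H1 _].
 set (j := Nat.log2 nm) in *.
 assert (ln (INR (2 ^ j)) <= ln (INR nm)) by (apply ln_INR_mono; auto).
 rewrite ln_INR_pow in H0 by lia. replace (INR 2) with 2 in H0 by (simpl; lra).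
 pose proof ln2_gt. pose proof (pos_INR j). rewrite S_INR. nra.
Qed.

Theorem mainTheorem11 :
  exists CS CK : R, 0 < CS /\ 0 < CK /\
  forall (n1 n2 s1 s2 Rk m : nat) (Gamma : R),
    (2 <= n1)%nat -> (2 <= n2)%nat ->
    (1 <= s1 <= n1)%nat -> (1 <= s2 <= n2)%nat ->
    (1 <= Rk <= Nat.min n1 n2)%nat ->
    1 <= Gamma -> (1 <= m)%nat ->
    improper_int_le
      (fun eps => sqrt (ln (INR (covnum n1 n2 (Sset n1 n2 s1 s2 Rk Gamma)
                                           (sqrt (INR m) * eps)))))
      (Gamma * sqrt (INR Rk) / sqrt (INR m))
      (sqrt (CS * Gamma^2 * (INR Rk)^2 * INR (s1 + s2)
               * ln (INR (Nat.max n1 n2)) / INR m))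
    /\
    improper_int_le
      (fun eps => sqrt (ln (INR (covnum n1 n2 (KRset n1 n2 s1 s2 Rk Gamma)
                                           (sqrt (INR m) * eps)))))
      (Gamma * sqrt (INR Rk) / sqrt (INR m))
      (sqrt (CK * Gamma^2 * (INR Rk)^2 * INR (s1 + s2)
               * (ln (INR (Nat.max n1 n2)))^3 / INR m)).
Proof.
 exists 200, 200000. split; [lra|]. split; [lra|].
 intros n1 n2 s1 s2 Rk m G Hn1 Hn2 Hs1 Hs2 HR HG Hm.
 set (L := ln (INR (Nat.max n1 n2))).
 assert (HL : / 2 <= L) by (apply L_ge; auto).
 assert (HRr : 1 <= INR Rk) by (apply (le_INR 1); lia).
 assert (Hmr : 1 <= INR m) by (apply (le_INR 1); lia).
 assert (Hsr : 2 <= INR (s1 + s2)) by (replace 2 with (INR 2) by (simpl; lra); apply le_INR; lia).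
 assert (HT : 0 < G * sqrt (INR Rk)) by (pose proof (sqrt_ge1 _ HRr); nra).
 split.
 - apply (finish n1 n2 _ (G * sqrt (INR Rk)) m (8 * (INR Rk * INR (s1 + s2))) (Gf (L + 1) 0)
            (/ 2 * sqrt (L + 1 + INR 0) * INR (0 + 5))); auto.
   + nra.
   + intros k. apply level_S; auto.
   + intros k. apply Gf_nonneg. lra.
   + intros K. apply sumG. lra.
   + replace (INR 0) with 0 by auto. replace (INR (0 + 5)) with 5 by (simpl; lra).
     apply final_S; auto.
 - set (k0 := S (Nat.log2 (Nat.max n1 n2))).
   apply (finish n1 n2 _ (G * sqrt (INR Rk)) m (511 * (INR Rk * INR (s1 + s2))) (Gf (L + 1) k0)
            (/ 2 * sqrt (L + 1 + INR k0) * INR (k0 + 5))); auto.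
   + nra.
   + intros k. apply level_K; auto.
   + intros k. apply Gf_nonneg. lra.
   + intros K. apply sumG. lra.
   + rewrite (plus_INR k0 5). replace (INR 5) with 5 by (simpl; lra).
     apply final_K; auto. apply pos_INR. apply k0_bound. lia.
Qed.
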